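(* Let $\mathcal M$ satisfy sufficient demand and let $(X^*,p^* )$ be a market equilibrium of $\mathcal M$. Then for every agent $i\in A$ and every optimal solution $(\beta_i,\gamma_i)$ of the dual of OB-LP$(i)$ at prices $p^*$, we have $\gamma_i>0$. Consequently $\sum_j p^*_jx^*_{ij}=m_i$ for every $i\in A$.
   Context: A market $\mathcal M$ consists of a finite set $A$ of agents, a finite set $G$ of divisible goods, each with supply $1$, and a finite index set $C$. Each agent $i$ has real coefficients $a_{ijk}$, requirements $r_{ik}\ge0$, delays $d_{ij}\ge 0$, budget $m_i>0$. CC$(i)$: $\sum_{j}a_{ijk}x_{ij}\ge r_{ik}$ for all $k$, $x_{ij}\ge0$. $X$ is supply respecting if $\sum_i x_{ij}\le1$ for all $j$. $(X,p)$ is a market equilibrium if $X$ is supply respecting, each $\mathbf x_i$ is an optimal solution of OB-LP$(i)$ at $p$, and $\sum_i x_{ij}<1\Rightarrow p_j=0$. OB-LP$(i)$ at prices $p$ is: minimize $\sum_j d_{ij}x_{ij}$ s.t. CC$(i)$ and $\sum_jp_jx_{ij}\le m_i$. Its dual has variables $\beta_{ik}\ge0$ ($k\in C$) for the covering constraints and $\gamma_i\ge0$ for the budget constraint: maximize $\sum_k r_{ik}\beta_{ik}-m_i\gamma_i$ s.t. $d_{ij}\ge\sum_k a_{ijk}\beta_{ik}-\gamma_ip_j$ for all $j$. $\mathcal M$ satisfies sufficient demand if for every agent $i$, every optimal solution of ''minimize $\sum_j d_{ij}x_{ij}$ s.t. CC$(i)$'' has some good $j$ with $x_{ij}>1$.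 *)

(* Defs.v *)
From HB Require Import structures.
From mathcomp Require Import all_boot all_order all_algebra.
Set Implicit Arguments. Unset Strict Implicit. Unset Printing Implicit Defensive.
Import Order.TTheory GRing.Theory Num.Theory.
Local Open Scope ring_scope.

(* Agents are 'I_na, goods are 'I_ng, the index set C is 'I_nc.
   a i j k = a_{ijk}, r i k = r_{ik}, d i j = d_{ij}, m i = m_i. *)

Section Market.
Variables (R : realFieldType) (na ng nc : nat).
Variables (a : 'I_na -> 'I_ng -> 'I_nc -> R) (r : 'I_na -> 'I_nc -> R)
          (d : 'I_na -> 'I_ng -> R) (m : 'I_na -> R).

Definition market_wf : Prop :=
  (forall i k, 0 <= r i k) /\ (forall i j, 0 <= d i j) /\ (forall i, 0 < m i).

Definition CC (i : 'I_na) (x : 'I_ng -> R) : Prop :=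
  (forall k, r i k <= \sum_j a i j k * x j) /\ (forall j, 0 <= x j).

Definition cost (i : 'I_na) (x : 'I_ng -> R) : R := \sum_j d i j * x j.

Definition spend (p : 'I_ng -> R) (x : 'I_ng -> R) : R := \sum_j p j * x j.

Definition OB_feasible (p : 'I_ng -> R) (i : 'I_na) (x : 'I_ng -> R) : Prop :=
  CC i x /\ spend p x <= m i.

Definition OB_optimal (p : 'I_ng -> R) (i : 'I_na) (x : 'I_ng -> R) : Prop :=
  OB_feasible p i x /\ (forall y, OB_feasible p i y -> cost i x <= cost i y).

Definition dual_feasible (p : 'I_ng -> R) (i : 'I_na)
    (beta : 'I_nc -> R) (gamma : R) : Prop :=
  (forall k, 0 <= beta k) /\ 0 <= gamma /\
  (forall j, \sum_k a i j k * beta k - gamma * p j <= d i j).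

Definition dual_obj (i : 'I_na) (beta : 'I_nc -> R) (gamma : R) : R :=
  \sum_k r i k * beta k - m i * gamma.

Definition dual_optimal (p : 'I_ng -> R) (i : 'I_na)
    (beta : 'I_nc -> R) (gamma : R) : Prop :=
  dual_feasible p i beta gamma /\
  (forall beta' gamma', dual_feasible p i beta' gamma' ->
     dual_obj i beta' gamma' <= dual_obj i beta gamma).

Definition supply_respecting (X : 'I_na -> 'I_ng -> R) : Prop :=
  forall j, \sum_i X i j <= 1.

Definition market_equilibrium (X : 'I_na -> 'I_ng -> R) (p : 'I_ng -> R) : Prop :=
  supply_respecting X /\
  (forall i, OB_optimal p i (X i)) /\
  (forall j, \sum_i X i j < 1 -> p j = 0).

Definition unconstrained_optimal (i : 'I_na) (x : 'I_ng -> R) : Prop :=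
  CC i x /\ (forall y, CC i y -> cost i x <= cost i y).

Definition sufficient_demand : Prop :=
  forall i x, unconstrained_optimal i x -> exists j, 1 < x j.

End Market.

(* Main.v *)
Require Import Defs.
From HB Require Import structures.
From mathcomp Require Import all_boot all_order all_algebra.
Import Order.TTheory GRing.Theory Num.Theory.
Local Open Scope ring_scope.
From mathcomp Require Import ring lra.
Set Implicit Arguments. Unset Strict Implicit. Unset Printing Implicit Defensive.

Section FM.
Variable R : realFieldType.

Definition feasS n (I : finType) (c : I -> R) (A : I -> 'I_n -> R) :=
  exists x : 'I_n -> R, forall i, 0 <= c i + \sum_v A i v * x v.

Definition certS n (I : finType) (c : I -> R) (A : I -> 'I_n -> R) :=
  exists l : I -> R, (forall i, 0 <= l i) /\ (forall v, \sum_i l i * A i v = 0)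
    /\ \sum_i l i * c i < 0.

Lemma sum_delta (I : finType) (i : I) (g : I -> R) :
  \sum_k (k == i)%:R * g k = g i.
Proof.
rewrite (bigD1 i) //= eqxx mul1r big1 ?addr0 // => k /negbTE ->.
by rewrite mul0r.
Qed.

Lemma sum_exch (I J : finType) (F : J -> I -> R) (g : I -> R) :
  \sum_i (\sum_j F j i) * g i = \sum_j \sum_i F j i * g i.
Proof.
under eq_bigr => i _ do rewrite mulr_suml.
by rewrite exchange_big.
Qed.

Lemma sum_comb (I J : finType) (l : J -> R) (w : J -> I -> R) (g : I -> R) :
  \sum_i (\sum_j l j * w j i) * g i = \sum_j l j * \sum_i w j i * g i.
Proof.
rewrite sum_exch; apply: eq_bigr => j _; rewrite mulr_sumr.
by apply: eq_bigr => i _; rewrite mulrA.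
Qed.

Lemma choose_t (I : finType) (a g : I -> R) :
  (forall i, a i = 0 -> 0 <= g i) ->
  (forall p q, 0 < a p -> a q < 0 -> 0 <= - a q * g p + a p * g q) ->
  exists t, forall i, 0 <= g i + a i * t.
Proof.
move=> Hz Hpq.
case: (pickP (fun p => 0 < a p)) => [p0 Hp0 | noP].
  case: (@arg_maxP _ _ _ p0 (fun p => 0 < a p) (fun p => - g p / a p) Hp0) => pm Hpm Hmax.
  exists (- g pm / a pm) => i.
  case: (ltrgtP (a i) 0) => Hai.
  - have := Hpq _ _ Hpm Hai.
    have -> : g i + a i * (- g pm / a pm) = (- a i * g pm + a pm * g i) / a pm.
      by field; rewrite gt_eqF.
    by move=> H; rewrite divr_ge0 // ltW.
  - have := Hmax i Hai => /=.
    rewrite ler_pdivrMr // => H.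
    rewrite mulrC; lra.
  - by rewrite Hai mul0r addr0; apply: Hz.
case: (pickP (fun q => a q < 0)) => [q0 Hq0 | noN].
  case: (@arg_minP _ _ _ q0 (fun q => a q < 0) (fun q => g q / - a q) Hq0) => qm Hqm Hmin.
  exists (g qm / - a qm) => i.
  case: (ltrgtP (a i) 0) => Hai.
  - have := Hmin i Hai => /= H.
    have Hpos : 0 < - a i by rewrite oppr_gt0.
    have Hpos' : 0 < - a qm by rewrite oppr_gt0.
    have -> : g i + a i * (g qm / - a qm) = (- a i) * (g i / - a i - g qm / - a qm).
      by field; rewrite ?lt_eqF // oppr_eq0 lt_eqF.
    by apply: mulr_ge0; [exact: ltW | rewrite subr_ge0].
  - by have := noP i; rewrite /= Hai.
  - by rewrite Hai mul0r addr0; apply: Hz.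
exists 0 => i; rewrite mulr0 addr0; apply: Hz.
have := noP i; have := noN i => /= H1 H2.
by apply/eqP; rewrite eq_le !leNgt H1 H2.
Qed.


Lemma lift_max_widen n (v : 'I_n) : lift ord_max v = widen_ord (leqnSn n) v.
Proof. by apply: val_inj; rewrite /= /bump leqNgt ltn_ord. Qed.

Lemma sum_last n (F : 'I_n.+1 -> R) :
  \sum_v F v = \sum_(v < n) F (lift ord_max v) + F ord_max.
Proof.
rewrite big_ord_recr /=; congr (_ + _).
by apply: eq_bigr => v _; rewrite lift_max_widen.
Qed.

Theorem farkas n : forall (I : finType) (c : I -> R) (A : I -> 'I_n -> R),
  ~ feasS c A -> certS c A.
Proof.
elim: n => [|n IH] I c A Hnf.
  case: (pickP (fun i => c i < 0)) => [i0 Hi0 | H].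
    exists (fun k => (k == i0)%:R); split; first by move=> k; exact: ler0n.
    split; first by case.
    by rewrite sum_delta.
  exfalso; apply: Hnf; exists (fun _ => 0) => i.
  rewrite big_ord0 addr0; have := H i => /=.
  by rewrite ltNge => /negbFE.
pose a i := A i ord_max.
pose J := (I + (I * I))%type.
pose w (j : J) (k : I) : R :=
  match j with
  | inl i => if a i == 0 then (k == i)%:R else 0
  | inr (p, q) => if (0 < a p) && (a q < 0)
                  then - a q * (k == p)%:R + a p * (k == q)%:R else 0
  end.
pose c' (j : J) := \sum_i w j i * c i.
pose A' (j : J) (v : 'I_n) := \sum_i w j i * A i (lift ord_max v).
have wge0 : forall j k, 0 <= w j k.
  move=> [i|[p q]] k /=; first by case: ifP => _ //; exact: ler0n.
  case: ifP => // /andP[Hp Hq].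
  by apply: addr_ge0; apply: mulr_ge0; rewrite ?ler0n ?oppr_ge0 ?ltW.
have wmax : forall j, \sum_i w j i * a i = 0.
  move=> [i|[p q]] /=.
    case: eqP => [Hi|_]; last by rewrite big1 // => k _; rewrite mul0r.
    by rewrite sum_delta Hi.
  case Hpq: ((0 < a p) && (a q < 0)); last by rewrite big1 // => k _; rewrite mul0r.
  under eq_bigr => k _ do rewrite mulrDl -!mulrA.
  rewrite big_split /= -!mulr_sumr !sum_delta; ring.
have Hnf' : ~ feasS c' A'.
  move=> [x' Hx']; apply: Hnf.
  pose g i := c i + \sum_v A i (lift ord_max v) * x' v.
  have HG : forall j, 0 <= \sum_i w j i * g i.
    move=> j; have := Hx' j.
    rewrite /c' /A' /g sum_exch.
    under [X in _ <= _ + X]eq_bigr => v _ do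
      under eq_bigr => i _ do rewrite -mulrA.
    rewrite -big_split /=.
    by congr (_ <= _); apply: eq_bigr => i _; rewrite mulrDr mulr_sumr.
  have [t Ht] : exists t, forall i, 0 <= g i + a i * t.
    apply: choose_t.
      move=> i Hi; have := HG (inl i); rewrite /= Hi eqxx.
      by rewrite sum_delta.
    move=> p q Hp Hq; have := HG (inr (p, q)); rewrite /= Hp Hq /=.
    under eq_bigr => k _ do rewrite mulrDl -!mulrA.
    by rewrite big_split /= -!mulr_sumr !sum_delta.
  exists (fun v => if unlift ord_max v is Some v' then x' v' else t) => i.
  rewrite sum_last unlift_none.
  under eq_bigr => v _ do rewrite liftK.
  by rewrite addrA; apply: Ht.
have [l' [Hl'0 [Hl'A Hl'c]]] := IH J c' A' Hnf'.
exists (fun i => \sum_j l' j * w j i); split.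
  by move=> i; apply: sumr_ge0 => j _; apply: mulr_ge0.
split.
  move=> v; rewrite sum_comb.
  case: (unliftP ord_max v) => [v'|] ->.
    exact: (Hl'A v').
  by rewrite big1 // => j _; have := wmax j; rewrite /a => ->; rewrite mulr0.
by rewrite sum_comb.
Qed.

End FM.

Section Main.
Variables (R : realFieldType) (na ng nc : nat).
Variables (a : 'I_na -> 'I_ng -> 'I_nc -> R) (r : 'I_na -> 'I_nc -> R)
          (d : 'I_na -> 'I_ng -> R) (m : 'I_na -> R).

Lemma sum_delta' (I : finType) (i : I) (g : I -> R) :
  \sum_k g k * (i == k)%:R = g i.
Proof.
rewrite (bigD1 i) //= eqxx mulr1 big1 ?addr0 // => k Hk.
by rewrite eq_sym (negbTE Hk) mulr0.
Qed.

Lemma wd (p : 'I_ng -> R) i (beta : 'I_nc -> R) gamma delta y :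
  (forall k, 0 <= beta k) ->
  (forall v, \sum_k a i v k * beta k - gamma * p v <= delta * d i v) ->
  CC a r i y ->
  \sum_k r i k * beta k <= delta * cost d i y + gamma * spend p y.
Proof.
move=> Hb Hs [Hcov Hy].
apply: (@le_trans _ _ (\sum_k (\sum_v a i v k * y v) * beta k)).
  by apply: ler_sum => k _; apply: ler_wpM2r.
rewrite sum_exch /cost /spend mulr_sumr mulr_sumr -big_split /=.
apply: ler_sum => v _.
have := Hs v => H.
have -> : \sum_k a i v k * y v * beta k = y v * \sum_k a i v k * beta k.
  by rewrite mulr_sumr; apply: eq_bigr => k _; ring.
have := Hy v => Hyv.
have : y v * (\sum_k a i v k * beta k) <= y v * (delta * d i v + gamma * p v).
  by apply: ler_wpM2l => //; lra.
move=> H2; apply: (le_trans H2); rewrite le_eqVlt; apply/orP; left.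
apply/eqP; ring.
Qed.


Lemma sd (p : 'I_ng -> R) i (x : 'I_ng -> R) eps :
  OB_optimal a r d m p i x -> 0 < eps ->
  exists beta gamma, dual_feasible a d p i beta gamma /\
     cost d i x - eps < dual_obj r m i beta gamma.
Proof.
move=> [[Hcc Hsp] Hopt] Heps.
set OPT := cost d i x.
pose I := ('I_ng + ('I_nc + bool))%type.
pose c (l : I) : R := match l with
  | inl j => 0 | inr (inl k) => - r i k
  | inr (inr true) => m i | inr (inr false) => OPT - eps end.
pose A (l : I) (v : 'I_ng) : R := match l with
  | inl j => (v == j)%:R | inr (inl k) => a i v k
  | inr (inr true) => - p v | inr (inr false) => - d i v end.
have Hnf : ~ feasS c A.
  move=> [y Hy].
  have Hfy : OB_feasible a r m p i y.
    split; first split.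
    - move=> k; have := Hy (inr (inl k)); rewrite /= => H; lra.
    - move=> j; have := Hy (inl j); rewrite /= add0r.
      by rewrite sum_delta.
    - have := Hy (inr (inr true)); rewrite /=.
      under eq_bigr => v _ do rewrite mulNr.
      rewrite sumrN /spend => H; lra.
  have := Hopt _ Hfy; have := Hy (inr (inr false)); rewrite /=.
  under eq_bigr => v _ do rewrite mulNr.
  rewrite sumrN -/(cost d i y) -/OPT => H1 H2; lra.
have [l [Hl0 [HlA Hlc]]] := farkas Hnf.
set lk := fun k => l (inr (inl k)).
set lb := l (inr (inr true)).
set lc := l (inr (inr false)).
have Hcol : forall v, \sum_k a i v k * lk k - lb * p v <= lc * d i v.
  move=> v; have := HlA v.
  rewrite big_sumType /= big_sumType /= big_bool /=.
  rewrite sum_delta'.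
  have := Hl0 (inl v) => H0.
  have -> : \sum_k a i v k * lk k = \sum_k l (inr (inl k)) * a i v k.
    by apply: eq_bigr => k _; rewrite mulrC.
  rewrite -/lb -/lc => H; lra.
have Hconst : lb * m i + lc * (OPT - eps) < \sum_k r i k * lk k.
  move: Hlc; rewrite big_sumType /= big_sumType /= big_bool /=.
  rewrite big1; last by move=> j _; rewrite mulr0.
  under eq_bigr => k _ do rewrite mulrN.
  rewrite sumrN -/lb -/lc.
  have -> : \sum_k r i k * lk k = \sum_k l (inr (inl k)) * r i k.
    by apply: eq_bigr => k _; rewrite mulrC.
  move=> H; lra.
have Hwd := wd (fun k => Hl0 (inr (inl k))) Hcol Hcc.
have Hlb : 0 <= lb := Hl0 _.
have Hlc0 : 0 <= lc := Hl0 _.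
have Hsp' : lb * spend p x <= lb * m i by apply: ler_wpM2l.
have Hlcpos : 0 < lc.
  rewrite lt_def Hlc0 andbT; apply/eqP => H0.
  move: Hwd Hconst; rewrite -/OPT H0 !mul0r => H1 H2; lra.
exists (fun k => lk k / lc), (lb / lc); split.
  split; first by move=> k; rewrite divr_ge0 // Hl0.
  split; first by rewrite divr_ge0.
  move=> v.
  have -> : \sum_k a i v k * (lk k / lc) - lb / lc * p v
            = (\sum_k a i v k * lk k - lb * p v) / lc.
    rewrite mulrBl mulr_suml; congr (_ - _).
      by apply: eq_bigr => k _; rewrite mulrA.
    by rewrite mulrAC.
  by rewrite ler_pdivrMr // [_ * lc]mulrC; apply: Hcol.
rewrite /dual_obj.
have -> : \sum_k r i k * (lk k / lc) - m i * (lb / lc)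
          = (\sum_k r i k * lk k - m i * lb) / lc.
  rewrite mulrBl mulr_suml; congr (_ - _).
    by apply: eq_bigr => k _; rewrite mulrA.
  by rewrite mulrA.
rewrite ltr_pdivlMr //; rewrite -/OPT; nra.
Qed.


Lemma lin_comb (w x y : 'I_ng -> R) t :
  \sum_v w v * (x v + t * (y v - x v)) =
  \sum_v w v * x v + t * (\sum_v w v * y v - \sum_v w v * x v).
Proof.
rewrite -sumrB mulr_sumr -big_split /=; apply: eq_bigr => v _; ring.
Qed.

Lemma slack_unc (p : 'I_ng -> R) i x :
  OB_optimal a r d m p i x -> spend p x < m i -> unconstrained_optimal a r d i x.
Proof.
move=> [[Hcc Hsp] Hopt] Hlt; split => // y Hy.
rewrite leNgt; apply/negP => Hcy.
set D := m i - spend p x.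
set e := spend p y - spend p x.
have HD : 0 < D by rewrite subr_gt0.
have [t [Ht0 Ht1 Hte]] : exists t, [/\ 0 < t, t <= 1 & t * e <= D].
  case: (lerP e D) => He.
    by exists 1; rewrite ltr01 lexx mul1r.
  have He0 : 0 < e by apply: lt_trans He.
  exists (D / e); split; first by rewrite divr_gt0.
    by rewrite ler_pdivrMr // mul1r ltW.
  by rewrite divfK ?gt_eqF.
pose z := fun v => x v + t * (y v - x v).
have Hz : OB_feasible a r m p i z.
  case: Hcc => Hcov Hx; case: Hy => Hcovy Hy.
  split; first split.
  - move=> k; rewrite (lin_comb (fun v => a i v k)).
    have := Hcov k; have := Hcovy k => H1 H2.
    set A1 := \sum_v a i v k * x v in H2 *.
    set B1 := \sum_v a i v k * y v in H1 *.
    have : 0 <= (1 - t) * (A1 - r i k) + t * (B1 - r i k).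
      by apply: addr_ge0; apply: mulr_ge0; lra.
    move=> H; nra.
  - move=> v; rewrite /z; have := Hx v; have := Hy v => H1 H2.
    have : 0 <= (1 - t) * x v + t * y v.
      by apply: addr_ge0; apply: mulr_ge0; lra.
    move=> H; nra.
  - rewrite /spend (lin_comb p) -/(spend p x) -/(spend p y) -/e.
    rewrite /D in Hte; lra.
have := Hopt _ Hz; rewrite /cost (lin_comb (d i)) -/(cost d i x) -/(cost d i y).
move=> H.
have : t * (cost d i y - cost d i x) < 0 by rewrite pmulr_rlt0 // subr_lt0.
lra.
Qed.

Lemma X_le1 (X : 'I_na -> 'I_ng -> R) (p : 'I_ng -> R) :
  market_equilibrium a r d m X p -> forall i j, X i j <= 1.
Proof.
move=> [Hsr [Hopt _]] i j.
apply: le_trans (Hsr j).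
rewrite (bigD1 i) //= lerDl; apply: sumr_ge0 => i' _.
by have [[[_ H] _] _] := Hopt i'; apply: H.
Qed.

Lemma not_unc (X : 'I_na -> 'I_ng -> R) (p : 'I_ng -> R) :
  sufficient_demand a r d -> market_equilibrium a r d m X p ->
  forall i, ~ unconstrained_optimal a r d i (X i).
Proof.
move=> Hsd Heq i Hu; have [j Hj] := Hsd i _ Hu.
by have := X_le1 Heq i j; rewrite leNgt Hj.
Qed.

End Main.

Unset Implicit Arguments.

Theorem lemmaE1 (R : realFieldType) (na ng nc : nat)
    (a : 'I_na -> 'I_ng -> 'I_nc -> R) (r : 'I_na -> 'I_nc -> R)
    (d : 'I_na -> 'I_ng -> R) (m : 'I_na -> R)
    (X : 'I_na -> 'I_ng -> R) (p : 'I_ng -> R) :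
  market_wf r d m ->
  sufficient_demand a r d ->
  market_equilibrium a r d m X p ->
  (forall i (beta : 'I_nc -> R) (gamma : R),
     dual_optimal a r d m p i beta gamma -> 0 < gamma) /\
  (forall i, spend p (X i) = m i).
Proof.
move=> Hwf Hsd Heq; have Hopt := proj1 (proj2 Heq).
split.
  move=> i beta gamma [[Hb [Hg Hs]] Hmax].
  rewrite lt_def Hg andbT; apply/eqP => Hg0.
  apply: (not_unc Hsd Heq (i:=i)).
  have HO : cost d i (X i) <= dual_obj r m i beta gamma.
    rewrite leNgt; apply/negP => Hlt.
    have [b' [g' [Hf' Hlt']]] := sd (eps := cost d i (X i) - dual_obj r m i beta gamma) (Hopt i) (ltac:(by rewrite subr_gt0)).
    have := Hmax _ _ Hf'; move: Hlt'.
    set O := cost d i (X i); set D := dual_obj r m i beta gamma => H1 H2.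
    lra.
  have [[Hcc _] _] := Hopt i.
  split => // y Hy; apply: (le_trans HO).
  have Hs' : forall v, \sum_k a i v k * beta k - gamma * p v <= 1 * d i v.
    by move=> v; rewrite mul1r; apply: Hs.
  have := wd Hb Hs' Hy; rewrite /dual_obj Hg0 !mul0r mulr0 subr0 mul1r addr0.
  done.
move=> i; have [[_ Hsp] _] := Hopt i.
apply/eqP; rewrite eq_le Hsp /= leNgt; apply/negP => Hlt.
exact: (not_unc Hsd Heq (i:=i) (slack_unc (Hopt i) Hlt)).
Qed.
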